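(* Let $I\subset\mathbb R$ be an interval and $f:I\to\mathbb R$ be $\mathcal G$-convex. Let $s$ be an interior point of $I$ at which $f$ is twice differentiable. Then $f(s)>0$ and $$f''(s)\ \ge\ \frac{1-f'(s)^2}{f(s)}.$$
   Context: $\mathcal G:=\{t\mapsto\sqrt{(t-t_0)^2+h^2}:\ t_0\in\mathbb R,\ h\ge0\}$. A function $f:I\to\mathbb R$ on an interval $I$ is $\mathcal G$-convex if for every $t_0\in I$ there is $g\in\mathcal G$ with $g(t_0)=f(t_0)$ and $g(u)\le f(u)$ for all $u\in I$. *)

(* Defs.v *)
From Stdlib Require Import Reals.
From Coquelicot Require Import Coquelicot.
Open Scope R_scope.

Definition is_interval (I : R -> Prop) : Prop :=
  forall x y z, I x -> I z -> x <= y -> y <= z -> I y.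

Definition Gfun (t0 h : R) (t : R) : R := sqrt ((t - t0) ^ 2 + h ^ 2).

Definition G_convex (I : R -> Prop) (f : R -> R) : Prop :=
  forall t0, I t0 ->
    exists a h, 0 <= h /\ Gfun a h t0 = f t0 /\
      (forall u, I u -> Gfun a h u <= f u).

Definition interior_pt (I : R -> Prop) (s : R) : Prop :=
  exists eps, 0 < eps /\ forall x, Rabs (x - s) < eps -> I x.

Definition twice_differentiable_at (f : R -> R) (s : R) : Prop :=
  (exists eps, 0 < eps /\ forall x, Rabs (x - s) < eps -> ex_derive f x) /\
  ex_derive (Derive f) s.

(* Main.v *)
Require Import Defs.
From Stdlib Require Import Reals.
From Coquelicot Require Import Coquelicot.
From Stdlib Require Import Lra Psatz.
Open Scope R_scope.

Lemma sq0 x : x ^ 2 = 0 -> x = 0.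
Proof. intros H. destruct (Req_dec x 0); auto. exfalso. apply (pow_nonzero x 2); auto. Qed.
Lemma sq_sum0 x y : x ^ 2 + y ^ 2 = 0 -> x = 0 /\ y = 0.
Proof. intros H. assert (0 <= x^2) by apply pow2_ge_0. assert (0 <= y^2) by apply pow2_ge_0.
split; apply sq0; lra. Qed.
Lemma sq_nn x y : 0 <= x ^ 2 + y ^ 2.
Proof. assert (0 <= x^2) by apply pow2_ge_0. assert (0 <= y^2) by apply pow2_ge_0. lra. Qed.

Lemma locA (phi : R -> R) (s e : R) :
  0 < e ->
  (forall x, Rabs (x - s) < e -> ex_derive phi x) ->
  ex_derive (Derive phi) s ->
  (forall x, Rabs (x - s) < e -> phi s <= phi x) ->
  Derive phi s = 0 /\ Derive (Derive phi) s >= 0.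
Proof.
  intros He Hd Hd2 Hmin.
  assert (D1 : Derive phi s = 0).
  { assert (Hs : Rabs (s - s) < e) by (replace (s-s) with 0 by ring; rewrite Rabs_R0; lra).
    pose proof (Derive_correct _ _ (Hd s Hs)) as H.
    apply is_derive_Reals in H.
    set (pr := exist (fun l => derivable_pt_lim phi s l) (Derive phi s) H : derivable_pt phi s).
    change (Derive phi s) with (derive_pt phi s pr).
    apply (deriv_minimum phi (s - e) (s + e) s pr); [lra|lra|].
    intros x Hx1 Hx2. apply Hmin. apply Rabs_def1; lra. }
  split; [exact D1|].
  destruct (Rlt_or_le (Derive (Derive phi) s) 0) as [Hneg|]; [|lra].
  exfalso.
  pose proof (Derive_correct _ _ Hd2) as H2. apply is_derive_Reals in H2.
  set (D := Derive (Derive phi) s) in *.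
  destruct (H2 (- D / 2)) as [del Hdel]; [lra|].
  set (t := Rmin del e / 2).
  assert (Ht : 0 < t) by (unfold t; pose proof (cond_pos del); unfold Rmin; destruct Rle_dec; lra).
  assert (Hte : t < e) by (unfold t; pose proof (cond_pos del); unfold Rmin; destruct Rle_dec; lra).
  assert (Htd : t < del) by (unfold t; pose proof (cond_pos del); unfold Rmin; destruct Rle_dec; lra).
  destruct (MVT_cor2 phi (Derive phi) s (s + t)) as [c [Hc1 Hc2]]; [lra| |].
  { intros c Hc. apply is_derive_Reals. apply Derive_correct. apply Hd.
    apply Rabs_def1; lra. }
  assert (Hneg2 : Derive phi c < 0).
  { specialize (Hdel (c - s)).
    assert (Hcs : c - s <> 0) by lra.
    assert (Hcd : Rabs (c - s) < del) by (apply Rabs_def1; lra).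
    specialize (Hdel Hcs Hcd).
    replace (s + (c - s)) with c in Hdel by ring.
    rewrite D1 in Hdel.
    apply Rabs_def2 in Hdel. destruct Hdel as [Hl _].
    assert (Hq : (Derive phi c - 0) / (c - s) < D / 2) by lra.
    unfold Rdiv in Hq.
    assert (Hp : 0 < c - s) by lra.
    destruct (Rlt_or_le (Derive phi c) 0) as [|Hge]; [assumption|].
    exfalso. assert (0 <= (Derive phi c - 0) * / (c - s)).
    { apply Rmult_le_pos; [lra|]. left. apply Rinv_0_lt_compat. lra. }
    lra. }
  assert (Hm : phi s <= phi (s + t)) by (apply Hmin; replace (s + t - s) with t by ring; rewrite Rabs_right; lra).
  assert (Derive phi c * (s + t - s) < 0).
  { replace (s + t - s) with t by ring. nra. }
  lra.
Qed.

Theorem mainTheorem17 (I : R -> Prop) (f : R -> R) (s : R) :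
  is_interval I -> G_convex I f -> interior_pt I s ->
  twice_differentiable_at f s ->
  0 < f s /\
  Derive (Derive f) s >= (1 - (Derive f s) ^ 2) / f s.
Proof.
  intros _ HG [e1 [He1 HI]] [[e2 [He2 Hdf]] Hd2f].
  assert (Is : I s) by (apply HI; replace (s-s) with 0 by ring; rewrite Rabs_R0; lra).
  destruct (HG s Is) as [a [h [Hh [Hgs Hle]]]].
  unfold Gfun in Hgs, Hle.
  assert (Hpos : 0 < f s).
  { assert (H0 : 0 <= f s) by (rewrite <- Hgs; apply sqrt_pos).
    destruct (Rle_lt_or_eq_dec 0 (f s) H0) as [|E]; [assumption|].
    exfalso.
    assert (HQ : (s - a) ^ 2 + h ^ 2 = 0).
    { apply sqrt_eq_0. { apply sq_nn. } rewrite Hgs. lra. }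
    destruct (sq_sum0 _ _ HQ) as [Ha Hh0]. assert (a = s) by lra. subst a h.
    assert (Hs : Rabs (s - s) < e2) by (replace (s-s) with 0 by ring; rewrite Rabs_R0; lra).
    pose proof (Derive_correct _ _ (Hdf s Hs)) as H.
    apply is_derive_Reals in H.
    destruct (H (1/2)) as [del Hdel]; [lra|].
    set (t := Rmin del e1 / 2).
    assert (Ht : 0 < t) by (unfold t; pose proof (cond_pos del); unfold Rmin; destruct Rle_dec; lra).
    assert (Hte : t < e1) by (unfold t; pose proof (cond_pos del); unfold Rmin; destruct Rle_dec; lra).
    assert (Htd : t < del) by (unfold t; pose proof (cond_pos del); unfold Rmin; destruct Rle_dec; lra).
    assert (Hp : t <= f (s + t)).
    { pose proof (Hle (s + t)) as Hl.
      replace ((s + t - s) ^ 2 + 0 ^ 2) with (t ^ 2) in Hl by ring.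
      rewrite sqrt_pow2 in Hl by lra. apply Hl. apply HI.
      replace (s + t - s) with t by ring. rewrite Rabs_right; lra. }
    assert (Hm : t <= f (s + - t)).
    { pose proof (Hle (s + - t)) as Hl.
      replace ((s + - t - s) ^ 2 + 0 ^ 2) with (t ^ 2) in Hl by ring.
      rewrite sqrt_pow2 in Hl by lra. apply Hl. apply HI.
      replace (s + - t - s) with (- t) by ring. rewrite Rabs_Ropp, Rabs_right; lra. }
    pose proof (Hdel t) as A. pose proof (Hdel (- t)) as B.
    assert (t <> 0) by lra. assert (- t <> 0) by lra.
    assert (Rabs t < del) by (rewrite Rabs_right; lra).
    assert (Rabs (- t) < del) by (rewrite Rabs_Ropp, Rabs_right; lra).
    specialize (A ltac:(assumption) ltac:(assumption)).
    specialize (B ltac:(assumption) ltac:(assumption)).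
    rewrite <- E in A, B.
    apply Rabs_def2 in A. apply Rabs_def2 in B.
    assert (1 <= (f (s + t) - 0) / t).
    { apply (Rmult_le_reg_r t); [lra|]. unfold Rdiv. rewrite Rmult_assoc, Rinv_l by lra. lra. }
    assert ((f (s + - t) - 0) / - t <= -1).
    { apply (Rmult_le_reg_r t); [lra|]. unfold Rdiv.
      replace ((f (s + - t) - 0) * / - t * t) with (- f (s + - t)) by (field; lra). lra. }
    lra. }
  split; [exact Hpos|].
  set (c := f s) in *.
  set (g := fun t => sqrt ((t - a) ^ 2 + h ^ 2)).
  set (g' := fun t => (t - a) / g t).
  set (e := Rmin e1 (Rmin e2 c)).
  assert (He : 0 < e) by (unfold e, Rmin; repeat destruct Rle_dec; lra).
  assert (He_1 : e <= e1) by (unfold e, Rmin; repeat destruct Rle_dec; lra).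
  assert (He_2 : e <= e2) by (unfold e, Rmin; repeat destruct Rle_dec; lra).
  assert (He_c : e <= c) by (unfold e, Rmin; repeat destruct Rle_dec; lra).
  assert (HQ : forall x, Rabs (x - s) < e -> 0 < (x - a) ^ 2 + h ^ 2).
  { intros x Hx.
    assert (Hc2 : c ^ 2 = (s - a) ^ 2 + h ^ 2).
    { rewrite <- Hgs. rewrite pow2_sqrt; [auto|apply sq_nn]. }
    apply Rabs_def2 in Hx.
    assert (H0 : 0 <= (x - a) ^ 2 + h ^ 2) by apply sq_nn.
    destruct (Rle_lt_or_eq_dec 0 _ H0) as [|E]; [assumption|].
    exfalso. destruct (sq_sum0 _ _ (eq_sym E)) as [Hxa Hh0]. assert (x = a) by lra. subst a h.
    replace ((s - x) ^ 2 + 0 ^ 2) with ((s - x) * (s - x)) in Hc2 by ring.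
    assert (0 < (c - (s - x)) * (c + (s - x))) by (apply Rmult_lt_0_compat; lra).
    replace (c ^ 2) with (c * c) in Hc2 by ring. nra. }
  assert (Hgd : forall x, Rabs (x - s) < e -> is_derive g x (g' x)).
  { intros x Hx. specialize (HQ x Hx). unfold g, g'. auto_derive.
    - replace ((x + - a) * ((x + - a) * 1) + h * (h * 1)) with ((x - a) ^ 2 + h ^ 2) by ring. auto.
    - replace ((x + - a) * ((x + - a) * 1) + h * (h * 1)) with ((x - a) ^ 2 + h ^ 2) by ring.
      assert (0 < sqrt ((x - a) ^ 2 + h ^ 2)) by (apply sqrt_lt_R0; auto).
      unfold g. field. lra. }
  assert (Hs : Rabs (s - s) < e) by (replace (s-s) with 0 by ring; rewrite Rabs_R0; lra).
  assert (Hgs' : g s = c) by exact Hgs.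
  assert (Hg2 : is_derive g' s (1 / c - (s - a) ^ 2 / c ^ 3)).
  { pose proof (HQ s Hs) as Q. unfold g', g. auto_derive.
    - replace ((s + - a) * ((s + - a) * 1) + h * (h * 1)) with ((s - a) ^ 2 + h ^ 2) by ring.
      split; auto. split; auto. apply Rgt_not_eq, sqrt_lt_R0; auto.
    - replace ((s + - a) * ((s + - a) * 1) + h * (h * 1)) with ((s - a) ^ 2 + h ^ 2) by ring.
      change (sqrt ((s - a) ^ 2 + h ^ 2)) with (g s). rewrite Hgs'. field. lra. }
  set (phi := fun t => f t - g t).
  assert (Hdphi : forall x, Rabs (x - s) < e -> ex_derive phi x).
  { intros x Hx. unfold phi. apply (ex_derive_minus f g).
    - apply Hdf. lra.
    - exists (g' x). apply Hgd. auto. }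
  assert (HDphi : forall x, Rabs (x - s) < e -> Derive phi x = Derive f x - g' x).
  { intros x Hx. unfold phi. rewrite Derive_minus.
    - rewrite (is_derive_unique g x (g' x)); auto.
    - apply Hdf. lra.
    - exists (g' x). apply Hgd. auto. }
  assert (Hd2phi : is_derive (Derive phi) s (Derive (Derive f) s - (1 / c - (s - a) ^ 2 / c ^ 3))).
  { apply (is_derive_ext_loc (fun t => Derive f t - g' t)).
    - exists (mkposreal e He). intros y Hy. symmetry. apply HDphi. exact Hy.
    - apply (is_derive_minus (Derive f) g'); [apply Derive_correct; exact Hd2f| exact Hg2]. }
  destruct (locA phi s e He Hdphi (ex_intro _ _ Hd2phi)) as [A B].
  - intros x Hx. unfold phi. change (f s - g s <= f x - g x). rewrite Hgs'. unfold c.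
    assert (g x <= f x) by (apply Hle, HI; lra). lra.
  - rewrite HDphi in A by exact Hs. rewrite (is_derive_unique _ _ _ Hd2phi) in B.
    assert (Df : Derive f s = (s - a) / c) by (unfold g' in A; rewrite Hgs' in A; lra).
    rewrite Df.
    replace ((1 - ((s - a) / c) ^ 2) / c) with (1 / c - (s - a) ^ 2 / c ^ 3) by (field; lra).
    lra.
Qed.
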